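(* Let $\sum_{\mathbf i}a_{\mathbf i}\,x_{i_1}x_{i_2}\cdots x_{i_n}$ ($a_{\mathbf i}\in K$) be a homogeneous primitive element of degree $n$ of the free associative algebra $K\langle x_1,\dots,x_n\rangle$. Then $$\sum_{\mathbf i}a_{\mathbf i}\,(\cdots((x_{i_1}\cdot x_{i_2})\cdot x_{i_3})\cdots)\cdot x_{i_n}\quad\text{and}\quad\sum_{\mathbf i}a_{\mathbf i}\,x_{i_1}\cdot(x_{i_2}\cdot(\cdots(x_{i_{n-1}}\cdot x_{i_n})\cdots))$$ are homogeneous primitive elements of degree $n$ of $K\{x_1,\dots,x_n\}$. In particular, for $n\ge3$, $\mathrm{Prim}\,\mathcal Mag(n)$ contains at least two copies of the $\Sigma_n$-representation $\mathcal Lie(n)$.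
   Context: $K$ is a field of characteristic $0$. In $K\langle x_1,\dots,x_n\rangle$ (free unital associative algebra), an element $f$ is primitive if $\Delta(f)=f\otimes1+1\otimes f$, where $\Delta$ is the algebra homomorphism with $\Delta(x_i)=x_i\otimes1+1\otimes x_i$. $K\{x_1,\dots,x_n\}$ is the free unitary magma algebra (non-associative, non-commutative, unit $1$, product $a\cdot b$); its tensor square is a magma algebra componentwise with $1\cdot a=a\cdot1=a$, and the co-addition $\Delta_a$ is the unital algebra homomorphism with $\Delta_a(x_i)=x_i\otimes1+1\otimes x_i$; $f$ is primitive if $\Delta_a(f)=f\otimes1+1\otimes f$. $\mathrm{Prim}\,\mathcal Mag(n)$ is the space of primitive elements of $K\{x_1,\dots,x_n\}$ multilinear of degree $n$, with $\Sigma_n$ acting by permuting variables; $\mathcal Lie(n)$ is the $\Sigma_n$-module of multilinear Lie polynomials of degree $n$ in $x_1,\dots,x_n$ (of dimension $(n-1)!$). *)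

(* Defs.v *)
From HB Require Import structures.
From mathcomp Require Import all_boot all_order all_algebra all_fingroup.
From mathcomp Require Import finmap.
From mathcomp.multinomials Require Import monalg.

Set Implicit Arguments.
Unset Strict Implicit.
Unset Printing Implicit Defensive.

Import GRing.Theory.
Local Open Scope ring_scope.

Section FreeModule.
Variable K : fieldType.

Definition linext (B C : choiceType) (phi : B -> {malg K[C]}) (f : {malg K[B]})
  : {malg K[C]} := \sum_(u <- msupp f) f@_u *: phi u.

Definition bilext (B : choiceType) (op : B -> B -> B) (f g : {malg K[B]})
  : {malg K[B]} :=
  \sum_(u <- msupp f) \sum_(v <- msupp g) << f@_u * g@_v *g op u v >>.

(* tensor product of two elements; the tensor square of the free module on
   B is identified with the free module on B * B (basis u (x) v = (u, v)) *)
Definition tens (B : choiceType) (f g : {malg K[B]}) : {malg K[(B * B)%type]} :=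
  \sum_(u <- msupp f) \sum_(v <- msupp g) << f@_u * g@_v *g (u, v) >>.
End FreeModule.

Definition pairop (B : Type) (op : B -> B -> B) (x y : B * B) : B * B :=
  (op x.1 y.1, op x.2 y.2).

Section FreeAssoc.
Variables (K : fieldType) (n : nat).

Definition word := seq 'I_n.
Definition assocAlg := {malg K[seq 'I_n]}.
Definition assocT2 := {malg K[(seq 'I_n * seq 'I_n)%type]}.

Definition amul (f g : assocAlg) : assocAlg := bilext (@cat 'I_n) f g.
Definition amul2 (f g : assocT2) : assocT2 := bilext (pairop (@cat 'I_n)) f g.
Definition aone : assocAlg := << [::] >>.
Definition aone2 : assocT2 := << ([::], [::]) >>.
Definition avar (i : 'I_n) : assocAlg := << [:: i] >>.

Definition Delta_var (i : 'I_n) : assocT2 :=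
  << ([:: i], [::]) >> + << ([::], [:: i]) >>.

Definition Delta_word (w : word) : assocT2 :=
  foldr (fun i acc => amul2 (Delta_var i) acc) aone2 w.

Definition Delta (f : assocAlg) : assocT2 := linext Delta_word f.

Definition assoc_primitive (f : assocAlg) : Prop :=
  Delta f = tens f aone + tens aone f.

Definition assoc_homog (d : nat) (f : assocAlg) : Prop :=
  forall w, w \in msupp f -> size w = d.

Definition assoc_multilinear (f : assocAlg) : Prop :=
  forall w, w \in msupp f -> perm_eq w (enum 'I_n).

Inductive is_lie : assocAlg -> Prop :=
| lie_var i : is_lie (avar i)
| lie_zero : is_lie 0
| lie_add p q : is_lie p -> is_lie q -> is_lie (p + q)
| lie_scale (c : K) p : is_lie p -> is_lie (c *: p)
| lie_bracket p q : is_lie p -> is_lie q -> is_lie (amul p q - amul q p).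

Definition in_Lie (f : assocAlg) : Prop := is_lie f /\ assoc_multilinear f.

Definition assoc_act (s : {perm 'I_n}) (f : assocAlg) : assocAlg :=
  linext (fun w : seq 'I_n => << map s w >> : assocAlg) f.
End FreeAssoc.

(* basis: option (mtree n), None = 1, Some t = nonempty bracketing     *)
Inductive mtree (n : nat) : Type :=
| MLeaf of 'I_n
| MNode of mtree n & mtree n.
Arguments MLeaf {n}.
Arguments MNode {n}.

Section MtreeCount.
Variable n : nat.
Fixpoint mtree_enc (t : mtree n) : GenTree.tree 'I_n :=
  match t with
  | MLeaf i => GenTree.Leaf i
  | MNode a b => GenTree.Node 0 [:: mtree_enc a; mtree_enc b]
  end.
Fixpoint mtree_dec (t : GenTree.tree 'I_n) : option (mtree n) :=
  match t with
  | GenTree.Leaf i => Some (MLeaf i)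
  | GenTree.Node _ [:: a; b] =>
      match mtree_dec a, mtree_dec b with
      | Some x, Some y => Some (MNode x y)
      | _, _ => None
      end
  | _ => None
  end.
Lemma mtree_encK : pcancel mtree_enc mtree_dec.
Proof. by elim=> [i|a IHa b IHb] //=; rewrite IHa IHb. Qed.
HB.instance Definition _ := Countable.copy (mtree n) (pcan_type mtree_encK).
End MtreeCount.

Section FreeMagma.
Variables (K : fieldType) (n : nat).

Definition mbasis := option (mtree n).
Definition magAlg := {malg K[option (mtree n)]}.
Definition magT2 := {malg K[(option (mtree n) * option (mtree n))%type]}.

Definition mop (u v : option (mtree n)) : option (mtree n) :=
  match u, v with
  | None, _ => v
  | _, None => u
  | Some a, Some b => Some (MNode a b)
  end.

Definition mmulA (f g : magAlg) : magAlg := bilext mop f g.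
Definition mmul2 (f g : magT2) : magT2 := bilext (pairop mop) f g.
Definition mag_one : magAlg := << None >>.
Definition mag_one2 : magT2 := << (None, None) >>.

Fixpoint Delta_tree (t : mtree n) : magT2 :=
  match t with
  | MLeaf i => << (Some (MLeaf i), None) >> + << (None, Some (MLeaf i)) >>
  | MNode a b => mmul2 (Delta_tree a) (Delta_tree b)
  end.
Definition Delta_basis (u : option (mtree n)) : magT2 :=
  if u is Some t then Delta_tree t else mag_one2.
Definition Delta_a (f : magAlg) : magT2 := linext Delta_basis f.

Definition mag_primitive (f : magAlg) : Prop :=
  Delta_a f = tens f mag_one + tens mag_one f.

Fixpoint leaves (t : mtree n) : seq 'I_n :=
  match t with
  | MLeaf i => [:: i]
  | MNode a b => leaves a ++ leaves b
  end.

Definition mdeg (u : option (mtree n)) : nat :=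
  if u is Some t then size (leaves t) else 0.

Definition mag_homog (d : nat) (f : magAlg) : Prop :=
  forall u, u \in msupp f -> mdeg u = d.

Definition mag_multilinear (f : magAlg) : Prop :=
  forall u, u \in msupp f -> perm_eq (if u is Some t then leaves t else [::]) (enum 'I_n).

Definition in_PrimMag (f : magAlg) : Prop := mag_primitive f /\ mag_multilinear f.

Fixpoint relabel (s : {perm 'I_n}) (t : mtree n) : mtree n :=
  match t with
  | MLeaf i => MLeaf (s i)
  | MNode a b => MNode (relabel s a) (relabel s b)
  end.

Definition mag_act (s : {perm 'I_n}) (f : magAlg) : magAlg :=
  linext (fun u : option (mtree n) => << omap (relabel s) u >> : magAlg) f.

Definition lnorm_word (w : seq 'I_n) : option (mtree n) :=
  if w is i :: w' then Some (foldl (fun t j => MNode t (MLeaf j)) (MLeaf i) w')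
  else None.
Fixpoint rnorm_word (w : seq 'I_n) : option (mtree n) :=
  match w with
  | [::] => None
  | [:: i] => Some (MLeaf i)
  | i :: w' => omap (MNode (MLeaf i)) (rnorm_word w')
  end.

Definition lnorm (f : assocAlg K n) : magAlg :=
  linext (fun w : seq 'I_n => << lnorm_word w >> : magAlg) f.
Definition rnorm (f : assocAlg K n) : magAlg :=
  linext (fun w : seq 'I_n => << rnorm_word w >> : magAlg) f.
End FreeMagma.

(* Main.v *)
Require Import Defs.
From HB Require Import structures.
From mathcomp Require Import all_boot all_order all_algebra all_fingroup.
From mathcomp Require Import finmap.
From mathcomp.multinomials Require Import monalg.
Import GRing.Theory.
Local Open Scope ring_scope.
Set Implicit Arguments.
Unset Strict Implicit.
Unset Printing Implicit Defensive.



Section Gen.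
Variable K : fieldType.

Definition lin (B C : choiceType) (P : {malg K[B]} -> {malg K[C]}) :=
  forall (c : K) f g, P (c *: f + g) = c *: P f + P g.

Lemma malgUZ (B : choiceType) (c : K) (u : B) : << c *g u >> = c *: (<< u >> : {malg K[B]}).
Proof.
apply/malgP => k; rewrite mcoeffZ !mcoeffU.
by case: eqP; rewrite ?mulr1 ?mulr0.
Qed.

Section L.
Variables (B C : choiceType) (P : {malg K[B]} -> {malg K[C]}) (HP : lin P).
Lemma lin0 : P 0 = 0.
Proof. by have := HP (-1) 0 0; rewrite scaler0 addr0 scaleN1r addNr. Qed.
Lemma linD f g : P (f + g) = P f + P g.
Proof. by have := HP 1 f g; rewrite !scale1r. Qed.
Lemma linZ c f : P (c *: f) = c *: P f.
Proof. by have := HP c f 0; rewrite !addr0 lin0 addr0. Qed.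
Lemma linN f : P (- f) = - P f.
Proof. by rewrite -scaleN1r linZ scaleN1r. Qed.
Lemma linB f g : P (f - g) = P f - P g.
Proof. by rewrite linD linN. Qed.
Lemma lin_sum (I : Type) (r : seq I) (F : I -> {malg K[B]}) :
  P (\sum_(i <- r) F i) = \sum_(i <- r) P (F i).
Proof.
elim: r => [|a r IH]; first by rewrite !big_nil lin0.
by rewrite !big_cons linD IH.
Qed.
End L.

Lemma linextEw (B C : choiceType) (phi : B -> {malg K[C]}) f (d : {fset B}) :
  (msupp f `<=` d)%fset -> linext phi f = \sum_(u <- d) f@_u *: phi u.
Proof.
move=> H; rewrite /linext (big_fset_incl _ H) // => x _ /mcoeff_outdom ->.
by rewrite scale0r.
Qed.

Lemma lin_linext (B C : choiceType) (phi : B -> {malg K[C]}) : lin (linext phi).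
Proof.
move=> c f g.
have s1 : (msupp f `<=` msupp f `|` msupp g)%fset by apply: fsubsetUl.
have s2 : (msupp g `<=` msupp f `|` msupp g)%fset by apply: fsubsetUr.
have s3 : (msupp (c *: f + g) `<=` msupp f `|` msupp g)%fset.
  apply: fsubset_trans (msuppD_le _ _) _.
  by apply: fsetSU; apply: msuppZ_le.
rewrite (linextEw _ s1) (linextEw _ s2) (linextEw _ s3).
rewrite scaler_sumr -big_split /=; apply: eq_bigr => u _.
by rewrite mcoeffD mcoeffZ scalerDl scalerA.
Qed.

Lemma linextU (B C : choiceType) (phi : B -> {malg K[C]}) u :
  linext phi << u >> = phi u.
Proof. by rewrite /linext msuppU oner_eq0 big_seq_fset1 mcoeffUU scale1r. Qed.

Lemma linext_ext (B C : choiceType) (phi psi : B -> {malg K[C]}) f :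
  (forall u, phi u = psi u) -> linext phi f = linext psi f.
Proof. by move=> H; rewrite /linext; apply: eq_bigr => u _; rewrite H. Qed.

Lemma linext_rep (B C : choiceType) (P : {malg K[B]} -> {malg K[C]}) :
  lin P -> forall f, P f = linext (fun u => P << u >>) f.
Proof.
move=> HP f; rewrite {1}(monalgE f) lin_sum //; apply: eq_bigr => u _.
by rewrite malgUZ linZ.
Qed.

Lemma lin_eq (B C : choiceType) (P Q : {malg K[B]} -> {malg K[C]}) :
  lin P -> lin Q -> (forall u, P << u >> = Q << u >>) -> forall f, P f = Q f.
Proof.
move=> HP HQ H f; rewrite (linext_rep HP) (linext_rep HQ); exact: linext_ext.
Qed.

Lemma lin_comp (B C D : choiceType) (P : {malg K[C]} -> {malg K[D]})
  (Q : {malg K[B]} -> {malg K[C]}) : lin P -> lin Q -> lin (fun f => P (Q f)).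
Proof. by move=> HP HQ c f g; rewrite HQ HP. Qed.

Lemma linext_linfun (B C : choiceType) (phi psi : B -> {malg K[C]}) c f :
  linext (fun u => c *: phi u + psi u) f = c *: linext phi f + linext psi f.
Proof.
rewrite /linext scaler_sumr -big_split; apply: eq_bigr => u _.
by rewrite scalerDr !scalerA mulrC.
Qed.

Definition gen2 (B1 B2 C : choiceType) (F : B1 -> B2 -> C) (f : {malg K[B1]})
  (g : {malg K[B2]}) : {malg K[C]} :=
  \sum_(u <- msupp f) \sum_(v <- msupp g) << f@_u * g@_v *g F u v >>.

Lemma gen2E (B1 B2 C : choiceType) (F : B1 -> B2 -> C) f g :
  gen2 F f g = linext (fun u => linext (fun v => << F u v >>) g) f.
Proof.
rewrite /gen2 /linext; apply: eq_bigr => u _; rewrite scaler_sumr.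
by apply: eq_bigr => v _; rewrite [LHS]malgUZ scalerA.
Qed.

Lemma gen2_linl (B1 B2 C : choiceType) (F : B1 -> B2 -> C) g :
  lin (fun f => gen2 F f g).
Proof. by move=> c f h; rewrite !gen2E lin_linext. Qed.

Lemma gen2_linr (B1 B2 C : choiceType) (F : B1 -> B2 -> C) f :
  lin (fun g => gen2 F f g).
Proof.
move=> c g h; rewrite !gen2E -linext_linfun; apply: linext_ext => u.
by rewrite lin_linext.
Qed.

Lemma gen2UU (B1 B2 C : choiceType) (F : B1 -> B2 -> C) u v :
  gen2 F << u >> << v >> = << F u v >>.
Proof. by rewrite gen2E !linextU. Qed.

End Gen.



Section More.
Variable K : fieldType.

Lemma lin_linext_comp (B C D : choiceType) (P : {malg K[C]} -> {malg K[D]})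
  (phi : B -> {malg K[C]}) f :
  lin P -> P (linext phi f) = linext (fun u => P (phi u)) f.
Proof.
move=> HP; rewrite (linext_rep (lin_comp HP (lin_linext phi))).
by apply: linext_ext => u; rewrite linextU.
Qed.

Lemma linext_ext_in (B C : choiceType) (phi psi : B -> {malg K[C]}) f :
  (forall u, u \in msupp f -> phi u = psi u) -> linext phi f = linext psi f.
Proof. by move=> H; rewrite /linext big_seq [RHS]big_seq; apply: eq_bigr => u /H ->. Qed.

Lemma linext0 (B C : choiceType) (f : {malg K[B]}) :
  linext (fun _ => 0 : {malg K[C]}) f = 0.
Proof. by rewrite /linext big1 // => u _; rewrite scaler0. Qed.

Lemma msupp_linextU (B C : choiceType) (h : B -> C) f k :
  k \in msupp (linext (fun u => << h u >> : {malg K[C]}) f) ->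
  exists2 u, u \in msupp f & k = h u.
Proof.
case Hh: (has (fun u => k == h u) (msupp f)).
  by move/hasP: Hh => [u H1 /eqP H2] _; exists u.
move=> Hk; exfalso; move: Hk; rewrite -mcoeff_neq0 /linext raddf_sum /=.
rewrite big1_seq ?eqxx // => u /= Hu; rewrite mcoeffZ mcoeffU.
move/hasPn: Hh => /(_ u Hu); rewrite eq_sym => /negbTE ->.
by rewrite mulr0.
Qed.
End More.

Section Assoc.
Variables (K : fieldType) (n : nat).
Local Notation A := (assocAlg K n).
Local Notation T := (assocT2 K n).

Lemma amul_linl (g : A) : lin (fun f => amul f g).
Proof. exact: (gen2_linl (@cat 'I_n) g). Qed.
Lemma amul_linr (f : A) : lin (fun g => amul f g).
Proof. exact: (gen2_linr (@cat 'I_n) f). Qed.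
Lemma amul2_linl (g : T) : lin (fun f => amul2 f g).
Proof. exact: (gen2_linl (pairop (@cat 'I_n)) g). Qed.
Lemma amul2_linr (f : T) : lin (fun g => amul2 f g).
Proof. exact: (gen2_linr (pairop (@cat 'I_n)) f). Qed.
Lemma amulUU (u v : seq 'I_n) : amul (<< u >> : A) << v >> = << u ++ v >>.
Proof. have := (@gen2UU K _ _ _ (@cat 'I_n) u v). done. Qed.
Lemma amul2UU (u v : (seq 'I_n * seq 'I_n)%type) : amul2 (<< u >> : T) << v >> = << pairop (@cat 'I_n) u v >>.
Proof. exact (@gen2UU K _ _ _ (pairop (@cat 'I_n)) u v). Qed.
End Assoc.

Section Tens.
Variables (K : fieldType) (B : choiceType).
Lemma tens_linl (g : {malg K[B]}) : lin (fun f => tens f g).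
Proof. exact: (gen2_linl (fun u v : B => (u, v)) g). Qed.
Lemma tens_linr (f : {malg K[B]}) : lin (fun g => tens f g).
Proof. exact: (gen2_linr (fun u v : B => (u, v)) f). Qed.
Lemma tensUU (u v : B) : tens (<< u >> : {malg K[B]}) << v >> = << (u, v) >>.
Proof. exact (@gen2UU K _ _ _ (fun u v : B => (u, v)) u v). Qed.
End Tens.



Section Assoc2.
Variables (K : fieldType) (n : nat).
Local Notation A := (assocAlg K n).
Local Notation T := (assocT2 K n).

Lemma amul2A (X Y Z : T) : amul2 (amul2 X Y) Z = amul2 X (amul2 Y Z).
Proof.
move: X; apply: (@lin_eq K _ _ (fun X => amul2 (amul2 X Y) Z) (fun X => amul2 X (amul2 Y Z))).
- exact: lin_comp (amul2_linl Z) (amul2_linl Y).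
- exact: amul2_linl.
move=> a; move: Y; apply: (@lin_eq K _ _ (fun Y => amul2 (amul2 <<a>> Y) Z) (fun Y => amul2 <<a>> (amul2 Y Z))).
- exact: lin_comp (amul2_linl Z) (amul2_linr _).
- exact: lin_comp (amul2_linr _) (amul2_linl Z).
move=> b; move: Z; apply: (@lin_eq K _ _ (fun Z => amul2 (amul2 <<a>> <<b>>) Z) (fun Z => amul2 <<a>> (amul2 <<b>> Z))).
- exact: amul2_linr.
- exact: lin_comp (amul2_linr _) (amul2_linr _).
move=> c; rewrite !amul2UU /pairop /= !catA.
by case: a b c => ? ? [? ?] [? ?].
Qed.

Lemma amul2_1l (X : T) : amul2 (aone2 K n) X = X.
Proof.
move: X; apply: (@lin_eq K _ _ (fun X => amul2 (aone2 K n) X) id).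
- exact: amul2_linr.
- by move=> c f g.
by move=> [a b]; rewrite amul2UU.
Qed.

Lemma amul2_1r (X : T) : amul2 X (aone2 K n) = X.
Proof.
move: X; apply: (@lin_eq K _ _ (fun X => amul2 X (aone2 K n)) id).
- exact: amul2_linl.
- by move=> c f g.
by move=> [a b]; rewrite amul2UU /pairop /= !cats0.
Qed.

Lemma amul_1l (X : A) : amul (aone K n) X = X.
Proof.
move: X; apply: (@lin_eq K _ _ (fun X => amul (aone K n) X) id).
- exact: amul_linr.
- by move=> c f g.
by move=> a; rewrite amulUU.
Qed.

Lemma amul_1r (X : A) : amul X (aone K n) = X.
Proof.
move: X; apply: (@lin_eq K _ _ (fun X => amul X (aone K n)) id).
- exact: amul_linl.
- by move=> c f g.
by move=> a; rewrite amulUU cats0.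
Qed.

Lemma Delta_word_cat (u v : seq 'I_n) :
  Delta_word K (u ++ v) = amul2 (Delta_word K u) (Delta_word K v).
Proof.
elim: u => [|i u IH] /=; first by rewrite amul2_1l.
by rewrite IH amul2A.
Qed.

Lemma Delta_lin : lin (@Delta K n).
Proof. exact: lin_linext. Qed.

Lemma DeltaU (w : seq 'I_n) : Delta (<< w >> : A) = Delta_word K w.
Proof. exact: linextU. Qed.

Lemma Delta_mul (p q : A) : Delta (amul p q) = amul2 (Delta p) (Delta q).
Proof.
move: p; apply: (@lin_eq K _ _ (fun p => Delta (amul p q)) (fun p => amul2 (Delta p) (Delta q))).
- exact: lin_comp Delta_lin (amul_linl q).
- exact: lin_comp (amul2_linl _) Delta_lin.
move=> a; move: q; apply: (@lin_eq K _ _ (fun q => Delta (amul <<a>> q)) (fun q => amul2 (Delta <<a>>) (Delta q))).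
- exact: lin_comp Delta_lin (amul_linr _).
- exact: lin_comp (amul2_linr _) Delta_lin.
by move=> b; rewrite amulUU !DeltaU Delta_word_cat.
Qed.

Lemma tens_amul2 (a b c d : A) :
  amul2 (tens a b) (tens c d) = tens (amul a c) (amul b d).
Proof.
move: a; apply: (@lin_eq K _ _ (fun a => amul2 (tens a b) (tens c d)) (fun a => tens (amul a c) (amul b d))).
- exact: lin_comp (amul2_linl _) (tens_linl _).
- exact: lin_comp (tens_linl _) (amul_linl _).
move=> x; move: b; apply: (@lin_eq K _ _ (fun b => amul2 (tens <<x>> b) (tens c d)) (fun b => tens (amul <<x>> c) (amul b d))).
- exact: lin_comp (amul2_linl _) (tens_linr _).
- exact: lin_comp (tens_linr _) (amul_linl _).
move=> y; move: c; apply: (@lin_eq K _ _ (fun c => amul2 (tens <<x>> <<y>>) (tens c d)) (fun c => tens (amul <<x>> c) (amul <<y>> d))).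
- exact: lin_comp (amul2_linr _) (tens_linl _).
- exact: lin_comp (tens_linl _) (amul_linr _).
move=> z; move: d; apply: (@lin_eq K _ _ (fun d => amul2 (tens <<x>> <<y>>) (tens <<z>> d)) (fun d => tens (amul <<x>> <<z>>) (amul <<y>> d))).
- exact: lin_comp (amul2_linr _) (tens_linr _).
- exact: lin_comp (tens_linr _) (amul_linr _).
by move=> t; rewrite !amulUU !tensUU amul2UU.
Qed.

Lemma amul2Dl (f g h : T) : amul2 (f + g) h = amul2 f h + amul2 g h.
Proof. exact: (linD (amul2_linl h)). Qed.
Lemma amul2Dr (f g h : T) : amul2 h (f + g) = amul2 h f + amul2 h g.
Proof. exact: (linD (amul2_linr h)). Qed.
Lemma tensDl (f g h : A) : tens (f + g) h = tens f h + tens g h.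
Proof. exact: (linD (tens_linl h)). Qed.
Lemma tensDr (f g h : A) : tens h (f + g) = tens h f + tens h g.
Proof. exact: (linD (tens_linr h)). Qed.
Lemma tensBl (f g h : A) : tens (f - g) h = tens f h - tens g h.
Proof. exact: (linB (tens_linl h)). Qed.
Lemma tensBr (f g h : A) : tens h (f - g) = tens h f - tens h g.
Proof. exact: (linB (tens_linr h)). Qed.
Lemma tensZl c (f h : A) : tens (c *: f) h = c *: tens f h.
Proof. exact: (linZ (tens_linl h)). Qed.
Lemma tensZr c (f h : A) : tens h (c *: f) = c *: tens h f.
Proof. exact: (linZ (tens_linr h)). Qed.
Lemma tens0l (h : A) : tens 0 h = 0.
Proof. exact: (lin0 (tens_linl h)). Qed.
Lemma tens0r (h : A) : tens h 0 = 0.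
Proof. exact: (lin0 (tens_linr h)). Qed.
Lemma DeltaD (f g : A) : Delta (f + g) = Delta f + Delta g.
Proof. exact: (linD Delta_lin). Qed.
Lemma DeltaB (f g : A) : Delta (f - g) = Delta f - Delta g.
Proof. exact: (linB Delta_lin). Qed.
Lemma DeltaZ c (f : A) : Delta (c *: f) = c *: Delta f.
Proof. exact: (linZ Delta_lin). Qed.
Lemma Delta0 : Delta (0 : A) = 0.
Proof. exact: (lin0 Delta_lin). Qed.

Lemma zmod6 (V : zmodType) (a b c d e h : V) :
  a + b + (c + d) - (e + c + (b + h)) = (a - e) + (d - h).
Proof.
rewrite !opprD (addrC (-e)) (addrC c d) !addrA addrK (addrAC a b d).
rewrite (addrAC (a + d) b (-e)) addrK (addrAC a d (-e)).
done.
Qed.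

Lemma amul2_exp (X1 X2 Y1 Y2 : T) : amul2 (X1 + X2) (Y1 + Y2) =
  amul2 X1 Y1 + amul2 X1 Y2 + (amul2 X2 Y1 + amul2 X2 Y2).
Proof. by rewrite amul2Dl !amul2Dr. Qed.

Lemma amul2_tens_exp (p o q o' : A) :
  amul2 (tens p o + tens o p) (tens q o' + tens o' q) =
  amul2 (tens p o) (tens q o') + amul2 (tens p o) (tens o' q) +
  (amul2 (tens o p) (tens q o') + amul2 (tens o p) (tens o' q)).
Proof. exact: amul2_exp. Qed.

Lemma bracket_abstract (A' T' : zmodType) (m : A' -> A' -> A') (m2 : T' -> T' -> T')
  (t : A' -> A' -> T') (o : A')
  (m2Dl : forall x y z, m2 (x + y) z = m2 x z + m2 y z)
  (m2Dr : forall x y z, m2 z (x + y) = m2 z x + m2 z y)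
  (tm : forall a b c d, m2 (t a b) (t c d) = t (m a c) (m b d))
  (m1l : forall a, m o a = a) (m1r : forall a, m a o = a)
  (tBl : forall a b c, t (a - b) c = t a c - t b c)
  (tBr : forall a b c, t c (a - b) = t c a - t c b) (p q : A') :
  m2 (t p o + t o p) (t q o + t o q) - m2 (t q o + t o q) (t p o + t o p) =
  t (m p q - m q p) o + t o (m p q - m q p).
Proof.
rewrite !m2Dl !m2Dr !tm !m1l !m1r tBl tBr.
exact: zmod6.
Qed.

Lemma aoneE : aone K n = << [::] >>. Proof. by []. Qed.
Lemma lie_prim (p0 : A) : is_lie p0 -> assoc_primitive p0.
Proof.
move=> Hl; rewrite /assoc_primitive; elim: Hl.
- move=> i; rewrite /avar DeltaU /= amul2_1r aoneE !tensUU //.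
- by rewrite Delta0 tens0l tens0r (@addr0 T).
- move=> p q _ Hp _ Hq.
  rewrite DeltaD Hp Hq tensDl tensDr.
  by rewrite [LHS](@addrACA T).
- move=> c p _ Hp.
  by rewrite DeltaZ Hp tensZl tensZr (@scalerDr K T).
move=> p q _ Hp _ Hq.
rewrite DeltaB !Delta_mul Hp Hq.
exact: (bracket_abstract amul2Dl amul2Dr tens_amul2 amul_1l amul_1r tensBl tensBr).
Qed.
End Assoc2.



Section Mag.
Variables (K : fieldType) (n : nat).
Local Notation A := (assocAlg K n).
Local Notation T := (assocT2 K n).
Local Notation M := (magAlg K n).
Local Notation M2 := (magT2 K n).
Local Notation ob := (option (mtree n)).

Lemma mmul2_linl (g : M2) : lin (fun f => mmul2 f g).
Proof. exact: (gen2_linl (pairop (@mop n)) g). Qed.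
Lemma mmul2_linr (f : M2) : lin (fun g => mmul2 f g).
Proof. exact: (gen2_linr (pairop (@mop n)) f). Qed.
Lemma mmul2UU (u v : (ob * ob)%type) : mmul2 (<< u >> : M2) << v >> = << pairop (@mop n) u v >>.
Proof. exact (@gen2UU K _ _ _ (pairop (@mop n)) u v). Qed.
Lemma mmul2Dl (f g h : M2) : mmul2 (f + g) h = mmul2 f h + mmul2 g h.
Proof. exact: (linD (mmul2_linl h)). Qed.
Lemma mmul2Dr (f g h : M2) : mmul2 h (f + g) = mmul2 h f + mmul2 h g.
Proof. exact: (linD (mmul2_linr h)). Qed.

Lemma mop_x0 (x : ob) : mop x None = x.
Proof. by case: x. Qed.

Lemma mmul2_1l (X : M2) : mmul2 (mag_one2 K n) X = X.
Proof.
move: X; apply: (@lin_eq K _ _ (fun X => mmul2 (mag_one2 K n) X) id).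
- exact: mmul2_linr.
- by move=> c f g.
by move=> [a b]; rewrite mmul2UU.
Qed.

Lemma mmul2_1r (X : M2) : mmul2 X (mag_one2 K n) = X.
Proof.
move: X; apply: (@lin_eq K _ _ (fun X => mmul2 X (mag_one2 K n)) id).
- exact: mmul2_linl.
- by move=> c f g.
by move=> [a b]; rewrite mmul2UU /pairop /= !mop_x0.
Qed.

Lemma Delta_a_lin : lin (@Delta_a K n).
Proof. exact: lin_linext. Qed.
Lemma Delta_aU (o : ob) : Delta_a (<< o >> : M) = Delta_basis K o.
Proof. exact: linextU. Qed.

Lemma lnorm_lin : lin (@lnorm K n).
Proof. exact: lin_linext. Qed.
Lemma rnorm_lin : lin (@rnorm K n).
Proof. exact: lin_linext. Qed.
Lemma lnormU (w : seq 'I_n) : lnorm (<< w >> : A) = << lnorm_word w >>.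
Proof. exact: linextU. Qed.
Lemma rnormU (w : seq 'I_n) : rnorm (<< w >> : A) = << rnorm_word w >>.
Proof. exact: linextU. Qed.

Definition T2l (X : T) : M2 :=
  linext (fun ab : (seq 'I_n * seq 'I_n)%type => << (lnorm_word ab.1, lnorm_word ab.2) >> : M2) X.
Definition T2r (X : T) : M2 :=
  linext (fun ab : (seq 'I_n * seq 'I_n)%type => << (rnorm_word ab.1, rnorm_word ab.2) >> : M2) X.

Lemma T2l_lin : lin T2l. Proof. exact: lin_linext. Qed.
Lemma T2r_lin : lin T2r. Proof. exact: lin_linext. Qed.
Lemma T2lU a : T2l << a >> = << (lnorm_word a.1, lnorm_word a.2) >>.
Proof. exact: linextU. Qed.
Lemma T2rU a : T2r << a >> = << (rnorm_word a.1, rnorm_word a.2) >>.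
Proof. exact: linextU. Qed.

Lemma lw_rcons (w : seq 'I_n) j :
  lnorm_word (rcons w j) = mop (lnorm_word w) (Some (MLeaf j)).
Proof. by case: w => [|i w] //=; rewrite foldl_rcons. Qed.

Lemma rw_cons (w : seq 'I_n) i :
  rnorm_word (i :: w) = mop (Some (MLeaf i)) (rnorm_word w).
Proof.
elim: w i => [|j w IH] i //.
change (omap (MNode (MLeaf i)) (rnorm_word (j :: w)) = mop (Some (MLeaf i)) (rnorm_word (j :: w))).
by rewrite IH; case: (rnorm_word w).
Qed.

Lemma DB_mop_r (x : ob) j :
  Delta_basis K (mop x (Some (MLeaf j))) = mmul2 (Delta_basis K x) (Delta_tree K (MLeaf j)).
Proof. by case: x => [t|] //=; rewrite mmul2_1l. Qed.

Lemma DB_mop_l (x : ob) j :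
  Delta_basis K (mop (Some (MLeaf j)) x) = mmul2 (Delta_tree K (MLeaf j)) (Delta_basis K x).
Proof. by case: x => [t|] //=; rewrite mmul2_1r. Qed.

Lemma L1_abs (V W : zmodType) (eV : (seq 'I_n * seq 'I_n)%type -> V) (eW : (ob * ob)%type -> W)
  (m2 : V -> V -> V) (mm2 : W -> W -> W) (t2 : V -> W) (lw : seq 'I_n -> ob)
  (dv : V) (dt : W) i a b
  (Hdv : dv = eV ([::i],[::]) + eV ([::],[::i]))
  (Hdt : dt = eW (Some (MLeaf i), None) + eW (None, Some (MLeaf i)))
  (m2Dr : forall x y z, m2 z (x + y) = m2 z x + m2 z y)
  (m2UU : forall u v, m2 (eV u) (eV v) = eV (pairop (@cat 'I_n) u v))
  (t2D : forall x y, t2 (x + y) = t2 x + t2 y)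
  (t2U : forall u, t2 (eV u) = eW (lw u.1, lw u.2))
  (mm2Dr : forall x y z, mm2 z (x + y) = mm2 z x + mm2 z y)
  (mm2UU : forall u v, mm2 (eW u) (eW v) = eW (pairop (@mop n) u v))
  (lwr : forall w j, lw (w ++ [::j]) = mop (lw w) (Some (MLeaf j))) :
  t2 (m2 (eV (a,b)) dv) = mm2 (t2 (eV (a,b))) dt.
Proof.
rewrite Hdv Hdt m2Dr !m2UU t2D !t2U mm2Dr !mm2UU /pairop /= !cats0 !mop_x0 !lwr.
done.
Qed.

Lemma L1r_abs (V W : zmodType) (eV : (seq 'I_n * seq 'I_n)%type -> V) (eW : (ob * ob)%type -> W)
  (m2 : V -> V -> V) (mm2 : W -> W -> W) (t2 : V -> W) (lw : seq 'I_n -> ob)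
  (dv : V) (dt : W) i a b
  (Hdv : dv = eV ([::i],[::]) + eV ([::],[::i]))
  (Hdt : dt = eW (Some (MLeaf i), None) + eW (None, Some (MLeaf i)))
  (m2Dl : forall x y z, m2 (x + y) z = m2 x z + m2 y z)
  (m2UU : forall u v, m2 (eV u) (eV v) = eV (pairop (@cat 'I_n) u v))
  (t2D : forall x y, t2 (x + y) = t2 x + t2 y)
  (t2U : forall u, t2 (eV u) = eW (lw u.1, lw u.2))
  (mm2Dl : forall x y z, mm2 (x + y) z = mm2 x z + mm2 y z)
  (mm2UU : forall u v, mm2 (eW u) (eW v) = eW (pairop (@mop n) u v))
  (lwc : forall w j, lw (j :: w) = mop (Some (MLeaf j)) (lw w)) :
  t2 (m2 dv (eV (a,b))) = mm2 dt (t2 (eV (a,b))).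
Proof.
rewrite Hdv Hdt m2Dl !m2UU t2D !t2U mm2Dl !mm2UU /pairop /= !lwc.
done.
Qed.

Lemma L1 (X : T) i : T2l (amul2 X (Delta_var K i)) = mmul2 (T2l X) (Delta_tree K (MLeaf i)).
Proof.
move: X; apply: (@lin_eq K _ _ (fun X => T2l (amul2 X (Delta_var K i))) (fun X => mmul2 (T2l X) (Delta_tree K (MLeaf i)))).
- exact: lin_comp T2l_lin (amul2_linl _).
- exact: lin_comp (mmul2_linl _) T2l_lin.
move=> [a b].
exact: (@L1_abs _ _ (fun u => << u >>) (fun u => << u >>) (@amul2 K n) (@mmul2 K n) T2l (@lnorm_word n)
  (Delta_var K i) (Delta_tree K (MLeaf i)) i a b erefl erefl (@amul2Dr K n) (@amul2UU K n) (linD T2l_lin)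
  T2lU (@mmul2Dr) (@mmul2UU) (fun w j => etrans (congr1 _ (cats1 w j)) (lw_rcons w j))).
Qed.

Lemma L1r (X : T) i : T2r (amul2 (Delta_var K i) X) = mmul2 (Delta_tree K (MLeaf i)) (T2r X).
Proof.
move: X; apply: (@lin_eq K _ _ (fun X => T2r (amul2 (Delta_var K i) X)) (fun X => mmul2 (Delta_tree K (MLeaf i)) (T2r X))).
- exact: lin_comp T2r_lin (amul2_linr _).
- exact: lin_comp (mmul2_linr _) T2r_lin.
move=> [a b].
exact: (@L1r_abs _ _ (fun u => << u >>) (fun u => << u >>) (@amul2 K n) (@mmul2 K n) T2r (@rnorm_word n)
  (Delta_var K i) (Delta_tree K (MLeaf i)) i a b erefl erefl (@amul2Dl K n) (@amul2UU K n) (linD T2r_lin)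
  T2rU (@mmul2Dl) (@mmul2UU) (fun w j => rw_cons w j)).
Qed.

End Mag.



Section Part1.
Variables (K : fieldType) (n : nat).
Local Notation A := (assocAlg K n).
Local Notation T := (assocT2 K n).
Local Notation M := (magAlg K n).
Local Notation M2 := (magT2 K n).
Local Notation ob := (option (mtree n)).

Lemma Delta_word1 (j : 'I_n) : Delta_word K [:: j] = Delta_var K j.
Proof. exact: amul2_1r. Qed.

Lemma KL (w : seq 'I_n) : Delta_basis K (lnorm_word w) = T2l (Delta_word K w).
Proof.
elim/last_ind: w => [|w j IH].
  by rewrite /= /aone2 T2lU.
rewrite lw_rcons DB_mop_r IH -cats1 Delta_word_cat Delta_word1.
by rewrite L1.
Qed.

Lemma KR (w : seq 'I_n) : Delta_basis K (rnorm_word w) = T2r (Delta_word K w).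
Proof.
elim: w => [|i w IH].
  by rewrite /= /aone2 T2rU.
rewrite rw_cons DB_mop_l IH /=.
by rewrite L1r.
Qed.

Lemma DeltaA_lnorm (f : A) : Delta_a (lnorm f) = T2l (Delta f).
Proof.
move: f; apply: (@lin_eq K _ _ (fun f => Delta_a (lnorm f)) (fun f => T2l (Delta f))).
- exact: lin_comp (@Delta_a_lin K n) (@lnorm_lin K n).
- exact: lin_comp (@T2l_lin K n) (@Delta_lin K n).
by move=> w; rewrite lnormU Delta_aU DeltaU KL.
Qed.

Lemma DeltaA_rnorm (f : A) : Delta_a (rnorm f) = T2r (Delta f).
Proof.
move: f; apply: (@lin_eq K _ _ (fun f => Delta_a (rnorm f)) (fun f => T2r (Delta f))).
- exact: lin_comp (@Delta_a_lin K n) (@rnorm_lin K n).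
- exact: lin_comp (@T2r_lin K n) (@Delta_lin K n).
by move=> w; rewrite rnormU Delta_aU DeltaU KR.
Qed.

Lemma T2l_tens (a b : A) : T2l (tens a b) = tens (lnorm a) (lnorm b).
Proof.
move: a; apply: (@lin_eq K _ _ (fun a => T2l (tens a b)) (fun a => tens (lnorm a) (lnorm b))).
- exact: lin_comp (@T2l_lin K n) (tens_linl _).
- exact: lin_comp (tens_linl _) (@lnorm_lin K n).
move=> u; move: b; apply: (@lin_eq K _ _ (fun b => T2l (tens <<u>> b)) (fun b => tens (lnorm <<u>>) (lnorm b))).
- exact: lin_comp (@T2l_lin K n) (tens_linr _).
- exact: lin_comp (tens_linr _) (@lnorm_lin K n).
move=> v; rewrite (@tensUU K _ u v) T2lU (@lnormU K n u) (@lnormU K n v).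
by rewrite tensUU.
Qed.

Lemma T2r_tens (a b : A) : T2r (tens a b) = tens (rnorm a) (rnorm b).
Proof.
move: a; apply: (@lin_eq K _ _ (fun a => T2r (tens a b)) (fun a => tens (rnorm a) (rnorm b))).
- exact: lin_comp (@T2r_lin K n) (tens_linl _).
- exact: lin_comp (tens_linl _) (@rnorm_lin K n).
move=> u; move: b; apply: (@lin_eq K _ _ (fun b => T2r (tens <<u>> b)) (fun b => tens (rnorm <<u>>) (rnorm b))).
- exact: lin_comp (@T2r_lin K n) (tens_linr _).
- exact: lin_comp (tens_linr _) (@rnorm_lin K n).
move=> v; rewrite (@tensUU K _ u v) T2rU (@rnormU K n u) (@rnormU K n v).
by rewrite tensUU.
Qed.

Lemma lnorm_prim (f : A) : assoc_primitive f -> mag_primitive (lnorm f).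
Proof.
move=> H; rewrite /mag_primitive DeltaA_lnorm H (linD (@T2l_lin K n)).
rewrite (T2l_tens f (aone K n)) (T2l_tens (aone K n) f).
by rewrite /aone (@lnormU K n [::]).
Qed.

Lemma rnorm_prim (f : A) : assoc_primitive f -> mag_primitive (rnorm f).
Proof.
move=> H; rewrite /mag_primitive DeltaA_rnorm H (linD (@T2r_lin K n)).
rewrite (T2r_tens f (aone K n)) (T2r_tens (aone K n) f).
by rewrite /aone (@rnormU K n [::]).
Qed.

Definition lv (o : ob) : seq 'I_n := if o is Some t then leaves t else [::].

Lemma lv_lnorm (w : seq 'I_n) : lv (lnorm_word w) = w.
Proof.
case: w => [|i w] //=.
suff H : forall t, leaves (foldl (fun t j => MNode t (MLeaf j)) t w) = leaves t ++ w by rewrite H.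
elim: w => [|j w IH] t /=; first by rewrite cats0.
by rewrite IH /= -catA.
Qed.

Lemma lv_rnorm (w : seq 'I_n) : lv (rnorm_word w) = w.
Proof.
elim: w => [|i w IH] //; rewrite rw_cons.
by move: IH; case: (rnorm_word w) => [t|] /= <-.
Qed.

Lemma mdeg_lv (o : ob) : Defs.mdeg o = size (lv o).
Proof. by case: o. Qed.

Lemma lnorm_homog (f : A) : assoc_homog n f -> mag_homog n (lnorm f).
Proof.
move=> Hf u /msupp_linextU [w Hw ->].
by rewrite mdeg_lv lv_lnorm; apply: Hf.
Qed.

Lemma rnorm_homog (f : A) : assoc_homog n f -> mag_homog n (rnorm f).
Proof.
move=> Hf u /msupp_linextU [w Hw ->].
by rewrite mdeg_lv lv_rnorm; apply: Hf.
Qed.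

End Part1.



Section Part2.
Variables (K : fieldType) (n : nat).
Local Notation A := (assocAlg K n).
Local Notation M := (magAlg K n).
Local Notation ob := (option (mtree n)).

Definition gl (t : mtree n) (j : 'I_n) := MNode t (MLeaf j).

Definition rleaf (t : mtree n) : bool :=
  if t is MNode _ (MLeaf _) then true else false.

Lemma rleaf_foldl (w : seq 'I_n) t : rleaf t -> rleaf (foldl gl t w).
Proof.
elim: w t => [|j w IH] t Ht //=.
exact: IH.
Qed.

Lemma lr_neq (w : seq 'I_n) : (3 <= size w)%N -> lnorm_word w != rnorm_word w.
Proof.
case: w => [|a [|b [|c w]]] // _.
have -> : lnorm_word [:: a, b, c & w] = Some (foldl gl (gl (gl (MLeaf a) b) c) w) by [].
rewrite !rw_cons; case: (rnorm_word w) => [t|] /=;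
  apply/negP => /eqP [] /(congr1 rleaf); rewrite rleaf_foldl //.
Qed.

Lemma lw_map (s : {perm 'I_n}) (w : seq 'I_n) :
  lnorm_word (map s w) = omap (relabel s) (lnorm_word w).
Proof.
have H : forall (v : seq 'I_n) t, foldl gl (relabel s t) (map s v) = relabel s (foldl gl t v).
  by elim=> [|j v IH] t //=; rewrite -IH.
case: w => [|i w] //=; congr Some.
exact: (H w (MLeaf i)).
Qed.

Lemma rw_map (s : {perm 'I_n}) (w : seq 'I_n) :
  rnorm_word (map s w) = omap (relabel s) (rnorm_word w).
Proof.
elim: w => [|i w IH] //.
by rewrite map_cons !rw_cons IH; case: (rnorm_word w).
Qed.

Lemma lnorm_act (s : {perm 'I_n}) (p : A) : lnorm (assoc_act s p) = mag_act s (lnorm p).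
Proof.
have E1 : lnorm (assoc_act s p) = linext (fun w : seq 'I_n => << lnorm_word (map s w) >> : M) p.
  rewrite /assoc_act lin_linext_comp; last exact: lnorm_lin.
  by apply: linext_ext => w; exact: lnormU.
have E2 : mag_act s (lnorm p) = linext (fun w : seq 'I_n => << omap (relabel s) (lnorm_word w) >> : M) p.
  rewrite {1}/lnorm lin_linext_comp; last exact: lin_linext.
  by apply: linext_ext => w; exact: linextU.
by rewrite E1 E2; apply: linext_ext => w; rewrite lw_map.
Qed.

Lemma rnorm_act (s : {perm 'I_n}) (p : A) : rnorm (assoc_act s p) = mag_act s (rnorm p).
Proof.
have E1 : rnorm (assoc_act s p) = linext (fun w : seq 'I_n => << rnorm_word (map s w) >> : M) p.
  rewrite /assoc_act lin_linext_comp; last exact: rnorm_lin.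
  by apply: linext_ext => w; exact: rnormU.
have E2 : mag_act s (rnorm p) = linext (fun w : seq 'I_n => << omap (relabel s) (rnorm_word w) >> : M) p.
  rewrite {1}/rnorm lin_linext_comp; last exact: lin_linext.
  by apply: linext_ext => w; exact: linextU.
by rewrite E1 E2; apply: linext_ext => w; rewrite rw_map.
Qed.

Definition projL (f : M) : A :=
  linext (fun o : ob => if lnorm_word (lv o) == o then << lv o >> else 0 : A) f.
Definition projR (f : M) : A :=
  linext (fun o : ob => if rnorm_word (lv o) == o then << lv o >> else 0 : A) f.

Lemma projL_lin : lin projL. Proof. exact: lin_linext. Qed.
Lemma projR_lin : lin projR. Proof. exact: lin_linext. Qed.

Lemma projL_lnorm (p : A) : projL (lnorm p) = p.
Proof.
move: p; apply: (@lin_eq K _ _ (fun p => projL (lnorm p)) id).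
- exact: lin_comp (lin_linext _) (@lnorm_lin K n).
- by move=> c f g.
by move=> w; rewrite lnormU /projL linextU lv_lnorm eqxx.
Qed.

Lemma projR_rnorm (p : A) : projR (rnorm p) = p.
Proof.
move: p; apply: (@lin_eq K _ _ (fun p => projR (rnorm p)) id).
- exact: lin_comp (lin_linext _) (@rnorm_lin K n).
- by move=> c f g.
by move=> w; rewrite rnormU /projR linextU lv_rnorm eqxx.
Qed.

Lemma size_ml (p : A) w : assoc_multilinear p -> w \in msupp p -> size w = n.
Proof. by move=> H /H /perm_size ->; rewrite size_enum_ord. Qed.

Lemma projL_rnorm (q : A) : (2 < n)%N -> assoc_multilinear q -> projL (rnorm q) = 0.
Proof.
move=> Hn Hq; rewrite {1}/rnorm /projL lin_linext_comp; last exact: lin_linext.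
transitivity (linext (fun _ => 0 : A) q); last exact: linext0.
apply: linext_ext_in => w Hw; rewrite linextU lv_rnorm.
have := lr_neq (w := w); rewrite (size_ml Hq Hw) => /(_ Hn) /negbTE ->.
done.
Qed.

Lemma projR_lnorm (q : A) : (2 < n)%N -> assoc_multilinear q -> projR (lnorm q) = 0.
Proof.
move=> Hn Hq; rewrite {1}/lnorm /projR lin_linext_comp; last exact: lin_linext.
transitivity (linext (fun _ => 0 : A) q); last exact: linext0.
apply: linext_ext_in => w Hw; rewrite linextU lv_lnorm.
have := lr_neq (w := w); rewrite (size_ml Hq Hw) eq_sym => /(_ Hn) /negbTE ->.
done.
Qed.

Lemma inj_part (p q : A) : (2 < n)%N -> assoc_multilinear p -> assoc_multilinear q ->
  lnorm p + rnorm q = 0 -> p = 0 /\ q = 0.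
Proof.
move=> Hn Hp Hq H; split.
  have := congr1 projL H; rewrite (linD projL_lin) projL_lnorm projL_rnorm //.
  by rewrite addr0 (lin0 projL_lin).
have := congr1 projR H; rewrite (linD projR_lin) projR_rnorm projR_lnorm //.
by rewrite add0r (lin0 projR_lin).
Qed.

Lemma lnorm_ml (p : A) : assoc_multilinear p -> mag_multilinear (lnorm p).
Proof.
move=> Hp u /msupp_linextU [w Hw ->].
change (perm_eq (lv (lnorm_word w)) (enum 'I_n)); rewrite lv_lnorm; exact: Hp.
Qed.

Lemma rnorm_ml (p : A) : assoc_multilinear p -> mag_multilinear (rnorm p).
Proof.
move=> Hp u /msupp_linextU [w Hw ->].
change (perm_eq (lv (rnorm_word w)) (enum 'I_n)); rewrite lv_rnorm; exact: Hp.
Qed.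

End Part2.

Unset Implicit Arguments.


Theorem proposition4p8p4 (K : fieldType) (charK0 : [pchar K] =i pred0) (n : nat) :
  (forall f : assocAlg K n,
      assoc_homog n f -> assoc_primitive f ->
      (mag_homog n (lnorm f) /\ mag_primitive (lnorm f)) /\
      (mag_homog n (rnorm f) /\ mag_primitive (rnorm f)))
  /\
  ((2 < n)%N ->
   exists phi1 phi2 : assocAlg K n -> magAlg K n,
     (* both maps are linear on Lie(n) *)
     (forall (c : K) (p q : assocAlg K n), in_Lie p -> in_Lie q ->
        phi1 (c *: p + q) = c *: phi1 p + phi1 q /\
        phi2 (c *: p + q) = c *: phi2 p + phi2 q) /\
     (* they map Lie(n) into Prim Mag(n) *)
     (forall p, in_Lie p -> in_PrimMag (phi1 p) /\ in_PrimMag (phi2 p)) /\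
     (* they are Sigma_n-equivariant *)
     (forall (s : {perm 'I_n}) p, in_Lie p ->
        phi1 (assoc_act s p) = mag_act s (phi1 p) /\
        phi2 (assoc_act s p) = mag_act s (phi2 p)) /\
     (* the induced map Lie(n) (+) Lie(n) -> Prim Mag(n) is injective *)
     (forall p q, in_Lie p -> in_Lie q -> phi1 p + phi2 q = 0 -> p = 0 /\ q = 0)).
Proof.
split.
  move=> f Hh Hp; split; split.
  - exact: lnorm_homog.
  - exact: lnorm_prim.
  - exact: rnorm_homog.
  - exact: rnorm_prim.
move=> Hn; exists (@lnorm K n), (@rnorm K n); split; [|split; [|split]].
- move=> c p q _ _; split; [exact: lnorm_lin | exact: rnorm_lin].
- move=> p [Hl Hm]; have Hpr := lie_prim Hl; split; split.
  + exact: lnorm_prim.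
  + exact: lnorm_ml.
  + exact: rnorm_prim.
  + exact: rnorm_ml.
- move=> s p _; split; [exact: lnorm_act | exact: rnorm_act].
- move=> p q [_ Hp] [_ Hq]; exact: inj_part.
Qed.
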